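(* Let $\{(G_n,\Psi_n,\varphi^L_n,\varphi^U_n)\}_{n\ge0}$ be an $\mathcal{F}$-system (with $\varphi^U_n>0$) satisfying Condition $\Gamma$, with induced Cantor system $(X,H_X)$ and limit function $\varphi^U$. Define $s:X\to\mathbb{R}$ by $s(x)=\lim_{n\to\infty}s_n(x(n),H_X(x)(n))$. Then $s$ is continuous, $s>0$, and whenever $\varphi^U(x)\ne0$ we have $s(x)=\varphi^U(H_X(x))/\varphi^U(x)$.
   Context: An $\mathcal{F}$-system consists of: finite directed graphs $G_n$ ($n\ge0$), each vertex having at least one outgoing and one incoming edge; surjective maps $\Psi_n:G_{n+1}\to G_n$ sending edges to edges; such that (i) for each $n$ and $v\in G_n$ there are $m>n$ and distinct $v',v''\in G_{m+1}$ with $\Psi_n\circ\cdots\circ\Psi_m(v')=\Psi_n\circ\cdots\circ\Psi_m(v'')=v$; (ii) for every $m$ there is $n>m$ such that for every $g\in G_n$ the set $\{\Psi_m\circ\cdots\circ\Psi_{n-1}(g'):\overrightarrow{gg'}\in G_n\}$ has exactly one element; and maps $\varphi^L_n,\varphi^U_n:G_n\to[0,1]$ with $\varphi^L_n\le\varphi^U_n$, $\varphi^U_{n+1}(v')\le\varphi^U_n(\Psi_n(v'))$, $\varphi^L_{n+1}(v')\ge\varphi^L_n(\Psi_n(v'))$, and such that for every $g\in G_n$ there is $g'\in G_{n+1}$ with $\Psi_n(g')=g$, $\varphi^L_{n+1}(g')=\varphi^L_n(g)$, $\varphi^U_{n+1}(g')=\varphi^U_n(g)$. $X=\{x\in\prod_n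 G_n: x(n)=\Psi_n(x(n+1))\ \forall n\}$ (a Cantor space) and $H_X:X\to X$ is the continuous surjection whose graph is $\{(x,y)\in X^2:\overrightarrow{x(n)y(n)}\in G_n\ \forall n\}$. $\varphi^U(x)=\lim_n\varphi^U_n(x(n))$. For $u,v\in G_n$, $s_n(u,v)=\varphi^U_n(v)/\varphi^U_n(u)$. For an edge $\overrightarrow{uv}\in G_n$, $\Gamma_n(\overrightarrow{uv})=\max\{|s_n(v,u)-s_{n+1}(v',u')|,|s_n(u,v)-s_{n+1}(u',v')| : \overrightarrow{u'v'}\in G_{n+1},\Psi_n(u')=u,\Psi_n(v')=v\}$, $\Gamma_n=\max_{\overrightarrow{uv}}\Gamma_n(\overrightarrow{uv})$; Condition $\Gamma$ means $\sum_n\Gamma_n<1$. *)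

(* Defs.v *)
From mathcomp Require Import all_boot all_order all_algebra.
From mathcomp Require Import all_classical all_reals all_analysis.
Set Implicit Arguments. Unset Strict Implicit. Unset Printing Implicit Defensive.
Import Order.TTheory GRing.Theory Num.Theory numFieldNormedType.Exports.
Local Open Scope ring_scope.
Local Open Scope classical_set_scope.

Section FSystem.
Variable R : realType.
Variable V : nat -> finType.
Variable E : forall n, rel (V n).
Variable Psi : forall n, V n.+1 -> V n.
Variables phiL phiU : forall n, V n -> R.

Fixpoint proj (n k : nat) : V (Nat.add k n) -> V n :=
  match k return V (Nat.add k n) -> V n with
  | 0 => fun v => v
  | S k' => fun v => @proj n k' (@Psi (Nat.add k' n) v)
  end.
Arguments proj n k : clear implicits.

Definition Fsystem : Prop :=
  (forall n (v : V n), exists w, E v w) /\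
  (forall n (v : V n), exists u, E u v) /\
  (forall n (v : V n), exists v' : V n.+1, Psi v' = v) /\
  (forall n (u v : V n.+1), E u v -> E (Psi u) (Psi v)) /\
  (forall n (u v : V n), E u v ->
     exists u' v' : V n.+1, [/\ E u' v', Psi u' = u & Psi v' = v]) /\
  (* condition (i): m > n, v', v'' in G_{m+1} = G_{k+n} with k = m+1-n >= 2 *)
  (forall n (v : V n), exists k, (2 <= k)%N /\
     exists v' v'' : V (Nat.add k n), [/\ v' <> v'', proj n k v' = v & proj n k v'' = v]) /\
  (* condition (ii): n = k+m > m *)
  (forall m, exists k, (1 <= k)%N /\
     forall g : V (Nat.add k m), exists w : V m, forall w' : V m,
       (exists g', E g g' /\ proj m k g' = w') <-> w' = w) /\
  (forall n (v : V n), 0 <= phiL v /\ phiL v <= phiU v /\ phiU v <= 1) /\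
  (forall n (v' : V n.+1), phiU v' <= phiU (Psi v')) /\
  (forall n (v' : V n.+1), phiL (Psi v') <= phiL v') /\
  (forall n (g : V n), exists g' : V n.+1,
     [/\ Psi g' = g, phiL g' = phiL g & phiU g' = phiU g]).

(* the Cantor space X, as a predicate on threads *)
Definition inX (x : forall n, V n) : Prop := forall n, x n = Psi (x n.+1).

Definition phiU_lim (x : forall n, V n) : R := limn (fun n => phiU (x n)).

Definition sn n (u v : V n) : R := phiU v / phiU u.

Definition Gamma (n : nat) : R :=
  \big[Num.max/0]_(u : V n) \big[Num.max/0]_(v : V n | E u v)
   \big[Num.max/0]_(u' : V n.+1 | Psi u' == u)
   \big[Num.max/0]_(v' : V n.+1 | (Psi v' == v) && E u' v')
     Num.max `|sn v u - sn v' u'| `|sn u v - sn u' v'|.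

Definition conditionGamma : Prop :=
  exists l : R, (series Gamma @ \oo --> l) /\ l < 1.

(* continuity of f : X -> R for the (product) topology of X:
   f(y) is close to f(x) as soon as y agrees with x on a long enough initial segment *)
Definition continuous_on_X (f : (forall n, V n) -> R) : Prop :=
  forall x, inX x -> forall e : R, 0 < e -> exists N : nat,
    forall y, inX y -> (forall i, (i <= N)%N -> y i = x i) -> `|f x - f y| < e.

End FSystem.

(* Main.v *)
Require Import Defs.
From mathcomp Require Import all_boot all_order all_algebra.
From mathcomp Require Import all_classical all_reals all_analysis.
From mathcomp Require Import lra.
Import Order.TTheory GRing.Theory Num.Theory numFieldNormedType.Exports.
Local Open Scope ring_scope.
Local Open Scope classical_set_scope.


Lemma key (R : realType) (a G : R^nat) (l : R) :
  (forall n, `|a n.+1 - a n| <= G n) -> series G @ \oo --> l ->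
  exists s, a @ \oo --> s /\ forall q, `|s - a q| <= l - series G q.
Proof.
move=> aG Gl.
have G0 n : 0 <= G n by exact: le_trans (aG n).
have Gnd : nondecreasing_seq (series G).
  by apply/nondecreasing_seqP => n; rewrite seriesSr lerDl.
have Gle n : series G n <= l.
  by have := nondecreasing_cvgn_le Gnd (cvgP _ Gl) n; rewrite (cvg_lim _ Gl).
have cd : cvgn (series (telescope a)).
  apply: normed_cvg; apply: nondecreasing_is_cvgn.
    apply/nondecreasing_seqP => n; rewrite /series /=; unfold series; simpl; rewrite big_nat_recr //= lerDl normr_ge0 //.
  exists l => _ [n _ <-]; apply: (le_trans _ (Gle n)).
  rewrite /series /=; unfold series; simpl; apply: ler_sum => k _. exact: aG.
have aeq : a = (fun n => a 0%N + series (telescope a) n).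
  by apply/funext => n; rewrite -eq_sum_telescope.
have acv : a @ \oo --> a 0%N + limn (series (telescope a)).
  have h : (fun n => a 0%N + series (telescope a) n) @ \oo --> a 0%N + limn (series (telescope a)).
    by apply: cvgD; [exact: cvg_cst | exact: cd].
  by rewrite -aeq in h.
exists (a 0%N + limn (series (telescope a))); split => //.
move=> q; set s := _ + _ in acv *.
have ineq p : (q <= p)%N -> `|a p - a q| <= series G p - series G q.
  elim: p => [|p IH]; first by rewrite leqn0 => /eqP->; rewrite !subrr normr0.
  rewrite leq_eqVlt => /orP[/eqP<-|/IH ih]; first by rewrite !subrr normr0.
  rewrite seriesSr (le_trans (ler_distD (a p) _ _)) // [X in _ <= X]addrAC [X in X <= _]addrC; exact: lerD.
apply: (ler_cvg_to (T := nat) (a := \oo) (f := fun p => `|a p - a q|) (g := fun p => series G p - series G q)).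
- exact: (cvg_norm (cvgB acv (cvg_cst (a q)))).
- exact: (cvgB Gl (cvg_cst (series G q))).
- by near=> p; apply: ineq; near: p; exact: nbhs_infty_ge.
Unshelve. all: by end_near.
Qed.

Lemma bigmax_ge (R : realType) (I : eqType) (r : seq I) (P : pred I) (F : I -> R) i :
  i \in r -> P i -> F i <= \big[Num.max/0]_(j <- r | P j) F j.
Proof.
elim: r => // c r IH; rewrite inE big_cons => /orP[/eqP-> Pi|ir Pi].
  by rewrite Pi le_max lexx.
by case: (P c); rewrite ?le_max IH ?orbT.
Qed.

Lemma bigmax_ge_fin (R : realType) (I : finType) (P : pred I) (F : I -> R) i :
  P i -> F i <= \big[Num.max/0]_(j | P j) F j.
Proof. by move=> Pi; apply: bigmax_ge => //; rewrite mem_index_enum. Qed.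

Lemma gamma_bound (R : realType) (V : nat -> finType) (E : forall n, rel (V n))
  (Psi : forall n, V n.+1 -> V n) (phiU : forall n, V n -> R) n
  (u v : V n) (u' v' : V n.+1) :
  E n u v -> Psi n u' = u -> Psi n v' = v -> E n.+1 u' v' ->
  `|sn phiU u v - sn phiU u' v'| <= Gamma E Psi phiU n /\
  `|sn phiU v u - sn phiU v' u'| <= Gamma E Psi phiU n.
Proof.
move=> Euv Hu Hv Euv'.
have h : Num.max `|sn phiU v u - sn phiU v' u'| `|sn phiU u v - sn phiU u' v'|
   <= Gamma E Psi phiU n.
  rewrite /Gamma.
  apply: (le_trans _ (@bigmax_ge_fin _ _ _ _ u _)) => //.
  apply: (le_trans _ (@bigmax_ge_fin _ _ _ _ v _)) => //.
  apply: (le_trans _ (@bigmax_ge_fin _ _ _ _ u' _)); last by rewrite Hu.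
  apply: (le_trans _ (@bigmax_ge_fin _ _ _ _ v' _)); last by rewrite Hv eqxx Euv'.
  exact: lexx.
by split; apply: le_trans h; rewrite le_max lexx ?orbT.
Qed.

Lemma projX (V : nat -> finType) (Psi : forall n, V n.+1 -> V n) (x : forall n, V n) :
  inX Psi x -> forall m k, Defs.proj Psi (n := m) (k := k) (x (Nat.add k m)) = x m.
Proof.
move=> xX m; elim=> [//|k IH] /=.
by rewrite -(xX (Nat.add k m)).
Qed.

Theorem lemma5p3 (R : realType) (V : nat -> finType) (E : forall n, rel (V n))
  (Psi : forall n, V n.+1 -> V n) (phiL phiU : forall n, V n -> R)
  (H : (forall n, V n) -> (forall n, V n)) :
  Fsystem E Psi phiL phiU ->
  (forall n (v : V n), 0 < phiU n v) ->
  conditionGamma E Psi phiU ->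
  (* H is H_X: the map X -> X whose graph is {(x,y) : x(n) y(n) is an edge of G_n for all n} *)
  (forall x, inX Psi x -> inX Psi (H x)) ->
  (forall x y, inX Psi x -> inX Psi y -> ((forall n, E n (x n) (y n)) <-> y = H x)) ->
  exists s : (forall n, V n) -> R,
    (forall x, inX Psi x -> (fun n => sn phiU (x n) (H x n)) @ \oo --> s x) /\
    continuous_on_X Psi s /\
    (forall x, inX Psi x -> 0 < s x) /\
    (forall x, inX Psi x -> phiU_lim phiU x != 0 ->
       s x = phiU_lim phiU (H x) / phiU_lim phiU x).
Proof.
move=> [_ [_ [_ [_ [_ [_ [Hii [_ [HU _]]]]]]]]] Hpos [l [Gl l1]] HX HH.
have edge x : inX Psi x -> forall n, E n (x n) (H x n).
  by move=> xX; apply: (HH x (H x) xX (HX x xX)).2.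
pose a x n := sn phiU (x n) (H x n).
pose b x n := sn phiU (H x n) (x n).
have gb x : inX Psi x -> forall n,
    `|a x n - a x n.+1| <= Gamma E Psi phiU n /\
    `|b x n - b x n.+1| <= Gamma E Psi phiU n.
  move=> xX n; apply: gamma_bound; first exact: edge.
  - by rewrite -xX.
  - by rewrite -(HX x xX).
  - exact: edge.
have abnd x : inX Psi x -> forall n, `|a x n.+1 - a x n| <= Gamma E Psi phiU n.
  by move=> xX n; rewrite distrC; exact: (gb x xX n).1.
have bbnd x : inX Psi x -> forall n, `|b x n.+1 - b x n| <= Gamma E Psi phiU n.
  by move=> xX n; rewrite distrC; exact: (gb x xX n).2.
pose s x := lim (a x @ \oo).
have acv x : inX Psi x -> a x @ \oo --> s x.
  move=> xX; have [t [ht _]] := @key R _ _ _ (abnd x xX) Gl.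
  by rewrite /s (cvg_lim _ ht).
have abound x : inX Psi x -> forall q, `|s x - a x q| <= l - series (Gamma E Psi phiU) q.
  move=> xX; have [t [ht hb]] := @key R _ _ _ (abnd x xX) Gl.
  by rewrite /s (cvg_lim _ ht).
exists s; split; first exact: acv.
split.
  move=> x xX e e0.
  have e20 : 0 < e / 2 by rewrite divr_gt0.
  have [m _ Hm] := cvgr_dist_lt _ _ Gl _ e20.
  have hm := Hm m (leqnn m).
  have [k [k1 Hk]] := Hii m.
  exists (k + m)%N => y yX yx.
  have Hyk : y (Nat.add k m) = x (Nat.add k m) by exact: yx.
  have [w Hw] := Hk (x (Nat.add k m)).
  have Hxm : H x m = w.
    apply/(Hw (H x m)).1; exists (H x (Nat.add k m)); split.
      exact: edge.
    exact: projX (HX x xX) m k.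
  have Hym : H y m = w.
    apply/(Hw (H y m)).1; exists (H y (Nat.add k m)); split.
      rewrite -Hyk; exact: edge.
    exact: projX (HX y yX) m k.
  have am : a x m = a y m by rewrite /a Hxm Hym (yx m (leq_addl k m)).
  have h1 := abound x xX m.
  have h2 := abound y yX m.
  rewrite am in h1.
  have h3 : l - series (Gamma E Psi phiU) m < e / 2.
    by apply: le_lt_trans hm; exact: ler_norm.
  apply: le_lt_trans (ler_distD (a y m) _ _) _.
  rewrite (distrC (a y m)).
  lra.
split.
  move=> x xX.
  have [t [ht _]] := @key R _ _ _ (bbnd x xX) Gl.
  have ab : (a x \* b x) = fun _ => 1.
    apply/funext => n; rewrite /a /b /sn /=.
    have p1 := Hpos _ (x n); have p2 := Hpos _ (H x n).
    by rewrite mulrA divfK ?divff // gt_eqF.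
  have h1 : (a x \* b x) @ \oo --> s x * t by apply: cvgM => //; exact: acv.
  rewrite ab in h1.
  have st : 1 = s x * t by rewrite -(cvg_lim _ h1) // lim_cst.
  have s0 : 0 <= s x.
    apply: (ler_cvg_to (T := nat) (a := \oo) (cvg_cst 0) (acv x xX)).
    by near=> n; rewrite /a /sn ltW // divr_gt0.
  rewrite lt_neqAle s0 andbT; apply/eqP => s0'.
  by move: st; rewrite -s0' mul0r => /eqP; rewrite oner_eq0.
move=> x xX hL.
have cvU z : inX Psi z -> (fun n => phiU n (z n)) @ \oo --> phiU_lim phiU z.
  move=> zX; apply: nonincreasing_is_cvgn.
    by apply/nonincreasing_seqP => n; have := HU n (z n.+1); rewrite -zX.
  by exists 0 => _ [n _ <-]; exact: ltW.
have h : a x @ \oo --> phiU_lim phiU (H x) / phiU_lim phiU x.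
  apply: cvgM; first by apply: cvU; exact: HX.
  by apply: cvgV => //; exact: cvU xX.
by rewrite /s (cvg_lim _ h).
Unshelve. all: by end_near.
Qed.
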